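(* Let $(w_s,\eta_s)$ be the soliton-like traveling wave (homoclinic solution) with parameters satisfying $\frac{\beta(\nu+1)}{2(\nu+2)\eta_\infty^{\nu+3}}<s^2<\frac{\beta}{\eta_\infty^{\nu+3}}$. Then the generalized eigenvalue problem $\kappa M''=\big[\gamma-\mu+\frac{s^2}{\mu-(\nu+2)\eta_s(z)^{-(\nu+3)}}\big]M$ on $\mathbb{R}$ has at most one eigenvalue $\mu<0$ with a nonzero eigenfunction $M\in L^2(\mathbb{R})$ (decaying with its derivative at $\pm\infty$). If such $\mu$ exists, it is an eigenvalue of $\mathcal{L}^s$ with eigenfunction $\big(M,\ sM\,(\mu-(\nu+2)\eta_s^{-(\nu+3)})^{-1}\big)^{tr}$.
   Context: Fix $\beta>0$, $\nu>-1$, $\kappa>0$, $\gamma=\beta/(\nu+2)$, $\eta_\infty>0$. The soliton-like traveling wave is a non-constant smooth pair $(w_s(z),\eta_s(z))$ with $\eta_s>0$, satisfying $s w_s+\eta_\infty^{-(\nu+2)}-\eta_s^{-(\nu+2)}=0$, $(\gamma-\kappa\partial_z^2)w_s+s(\eta_s-\eta_\infty)=0$, $w_s\to0$, $\eta_s\to\eta_\infty$ as $|z|\to\infty$. $\mathcal{L}^s=\begin{pmatrix}\gamma-\kappa\partial_z^2 & s\\ s & (\nu+2)\eta_s(z)^{-(\nu+3)}\end{pmatrix}$ on $L^2(\mathbb{R})^2$. *)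

(* Defs.v *)
From Stdlib Require Import Reals Lra.
Open Scope R_scope.

Definition smooth (f : R -> R) (d : nat -> R -> R) : Prop :=
  (forall x, d O x = f x) /\ (forall n x, derivable_pt_lim (d n) x (d (S n) x)).

Definition tends_pinf (f : R -> R) (l : R) : Prop :=
  forall eps, 0 < eps -> exists A, forall z, A <= z -> Rabs (f z - l) < eps.
Definition tends_minf (f : R -> R) (l : R) : Prop :=
  forall eps, 0 < eps -> exists A, forall z, z <= A -> Rabs (f z - l) < eps.

(* f in L^2(R) (improper Riemann sense; f^2 locally Riemann integrable with
   uniformly bounded integrals over compact intervals). *)
Definition sq_integrable (f : R -> R) : Prop :=
  (forall a b, inhabited (Riemann_integrable (fun x => (f x) ^ 2) a b)) /\
  exists C, forall a b (pr : Riemann_integrable (fun x => (f x) ^ 2) a b),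
    a <= b -> RiemannInt pr <= C.

Definition gam (beta nu : R) : R := beta / (nu + 2).

Definition soliton (beta nu kappa eta_inf s : R) (w eta : R -> R) : Prop :=
  exists dw deta : nat -> R -> R,
    smooth w dw /\ smooth eta deta /\
    (forall z, 0 < eta z) /\
    (exists z1 z2, w z1 <> w z2 \/ eta z1 <> eta z2) /\
    (forall z, s * w z + Rpower eta_inf (-(nu + 2)) - Rpower (eta z) (-(nu + 2)) = 0) /\
    (forall z, gam beta nu * w z - kappa * dw 2%nat z + s * (eta z - eta_inf) = 0) /\
    tends_pinf w 0 /\ tends_minf w 0 /\
    tends_pinf eta eta_inf /\ tends_minf eta eta_inf.

Definition pot (nu : R) (eta : R -> R) (z : R) : R :=
  (nu + 2) * Rpower (eta z) (-(nu + 3)).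

Definition gen_eigen (beta nu kappa s : R) (eta : R -> R) (mu : R) (M : R -> R) : Prop :=
  exists M1 M2 : R -> R,
    (forall z, derivable_pt_lim M z (M1 z)) /\
    (forall z, derivable_pt_lim M1 z (M2 z)) /\
    sq_integrable M /\ (exists z, M z <> 0) /\
    tends_pinf M 0 /\ tends_minf M 0 /\ tends_pinf M1 0 /\ tends_minf M1 0 /\
    (forall z, kappa * M2 z =
       (gam beta nu - mu + s ^ 2 / (mu - pot nu eta z)) * M z).

(* mu is an eigenvalue of L^s = [[gamma - kappa d^2, s], [s, pot]] on L^2(R)^2
   with eigenfunction (u, v) in its domain H^2 x L^2. *)
Definition Ls_eigen (beta nu kappa s : R) (eta : R -> R) (mu : R) (u v : R -> R) : Prop :=
  exists u1 u2 : R -> R,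
    (forall z, derivable_pt_lim u z (u1 z)) /\
    (forall z, derivable_pt_lim u1 z (u2 z)) /\
    sq_integrable u /\ sq_integrable u1 /\ sq_integrable u2 /\ sq_integrable v /\
    (exists z, u z <> 0 \/ v z <> 0) /\
    (forall z, gam beta nu * u z - kappa * u2 z + s * v z = mu * u z) /\
    (forall z, s * u z + pot nu eta z * v z = mu * v z).

(* Main.v *)
Require Import Defs.
From Stdlib Require Import Reals Lra Psatz FunctionalExtensionality Classical.
Open Scope R_scope.

Lemma dlim_ext f g x l : (forall y, f y = g y) -> derivable_pt_lim f x l -> derivable_pt_lim g x l.
Proof. intros H D. replace g with f by (apply functional_extensionality; auto). exact D. Qed.

Lemma dlim_eq f x l l' : derivable_pt_lim f x l -> l = l' -> derivable_pt_lim f x l'.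
Proof. intros; subst; auto. Qed.

Lemma dmult f g x a b : derivable_pt_lim f x a -> derivable_pt_lim g x b ->
  derivable_pt_lim (fun y => f y * g y) x (a * g x + f x * b).
Proof. intros. exact (derivable_pt_lim_mult f g x a b H H0). Qed.

Lemma dplus f g x a b : derivable_pt_lim f x a -> derivable_pt_lim g x b ->
  derivable_pt_lim (fun y => f y + g y) x (a + b).
Proof. intros. exact (derivable_pt_lim_plus f g x a b H H0). Qed.

Lemma dminus f g x a b : derivable_pt_lim f x a -> derivable_pt_lim g x b ->
  derivable_pt_lim (fun y => f y - g y) x (a - b).
Proof. intros. exact (derivable_pt_lim_minus f g x a b H H0). Qed.

Lemma dconst c x : derivable_pt_lim (fun _ => c) x 0.
Proof. exact (derivable_pt_lim_const c x). Qed.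

Lemma did x : derivable_pt_lim (fun y => y) x 1.
Proof. exact (derivable_pt_lim_id x). Qed.

Lemma dopp f x a : derivable_pt_lim f x a -> derivable_pt_lim (fun y => - f y) x (- a).
Proof. intros. exact (derivable_pt_lim_opp f x a H). Qed.

Lemma dscal c f x a : derivable_pt_lim f x a -> derivable_pt_lim (fun y => c * f y) x (c * a).
Proof. intros. exact (derivable_pt_lim_scal f c x a H). Qed.

Lemma ddiv f g x a b : derivable_pt_lim f x a -> derivable_pt_lim g x b -> g x <> 0 ->
  derivable_pt_lim (fun y => f y / g y) x ((a * g x - b * f x) / (g x)^2).
Proof. intros. replace ((g x)^2) with (Rsqr (g x)) by (unfold Rsqr; ring).
  exact (derivable_pt_lim_div f g x a b H H0 H1). Qed.

Lemma dcomp f g x a b : derivable_pt_lim f x a -> derivable_pt_lim g (f x) b ->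
  derivable_pt_lim (fun y => g (f y)) x (b * a).
Proof. intros. exact (derivable_pt_lim_comp f g x a b H H0). Qed.

Lemma dpow f x a e : 0 < f x -> derivable_pt_lim f x a ->
  derivable_pt_lim (fun y => Rpower (f y) e) x (e * Rpower (f x) (e - 1) * a).
Proof. intros. apply (dcomp f (fun u => Rpower u e)); auto. apply derivable_pt_lim_power; auto. Qed.

Lemma dexp f x a : derivable_pt_lim f x a -> derivable_pt_lim (fun y => exp (f y)) x (exp (f x) * a).
Proof. intros. apply (dcomp f exp); auto. apply derivable_pt_lim_exp. Qed.

Lemma dlim_cont f x l : derivable_pt_lim f x l -> continuity_pt f x.
Proof. intros. apply derivable_continuous_pt. exists l; auto. Qed.

Lemma dlim_local f g x l d : 0 < d -> (forall y, Rabs (y - x) < d -> f y = g y) ->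
  derivable_pt_lim f x l -> derivable_pt_lim g x l.
Proof.
  intros Hd H D eps Heps. destruct (D eps Heps) as [del Hdel].
  assert (0 < Rmin del d) by (apply Rmin_pos; [apply cond_pos|auto]).
  exists (mkposreal _ H0). intros h Hh0 Hh. simpl in Hh.
  rewrite <- H, <- H. apply Hdel; auto. apply Rlt_le_trans with (1 := Hh); apply Rmin_l.
  rewrite Rminus_diag, Rabs_R0; auto.
  replace (x + h - x) with h by ring. apply Rlt_le_trans with (1 := Hh); apply Rmin_r.
Qed.

Lemma dlim_locconst f x l d c : 0 < d -> (forall y, Rabs (y - x) < d -> f y = c) ->
  derivable_pt_lim f x l -> l = 0.
Proof. intros. apply (uniqueness_limite (fun _ => c) x). apply (dlim_local f _ x l d); auto.
  apply dconst. Qed.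

Lemma dlim_max f x l a b : a < x < b -> (forall y, a < y < b -> f y <= f x) ->
  derivable_pt_lim f x l -> l = 0.
Proof. intros Hx Hm D. assert (pr : derivable_pt f x) by (exists l; auto).
  rewrite <- (derive_pt_eq_0 f x l pr D). apply (deriv_maximum f a b x pr); try lra.
  intros; apply Hm; lra. Qed.

Lemma cont_pos f x : continuity_pt f x -> 0 < f x -> exists d, 0 < d /\ forall y, Rabs (y - x) < d -> 0 < f y.
Proof.
  intros C P. destruct (C (f x / 2)) as [d [Hd Hy]]; [lra|].
  exists d; split; auto. intros y Hyx. destruct (Req_dec y x) as [->|Hne]; auto.
  assert (Hz := Hy y). simpl in Hz. unfold R_dist in Hz. 
  assert (Rabs (f y - f x) < f x / 2). { apply Hz. split; auto. unfold D_x, no_cond; split; auto. }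
  apply Rabs_def2 in H. lra.
Qed.

Lemma cont_neg f x : continuity_pt f x -> f x < 0 -> exists d, 0 < d /\ forall y, Rabs (y - x) < d -> f y < 0.
Proof.
  intros C P. assert (C' : continuity_pt (fun y => - f y) x).
  { apply (continuity_pt_opp f x C). }
  destruct (cont_pos _ x C') as [d [Hd H]]; [lra|]. exists d; split; auto. intros y Hy; specialize (H y Hy); lra.
Qed.

Lemma mvt f f' a b : a < b -> (forall c, a <= c <= b -> derivable_pt_lim f c (f' c)) ->
  exists c, a < c < b /\ f b - f a = f' c * (b - a).
Proof. intros. destruct (MVT_cor2 f f' a b H H0) as [c [H1 H2]]. exists c; auto. Qed.

Lemma incr_le f f' a b : a <= b -> (forall c, a <= c <= b -> derivable_pt_lim f c (f' c)) ->
  (forall c, a < c < b -> 0 <= f' c) -> f a <= f b.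
Proof. intros Hab D P. destruct (Req_dec a b) as [->|Hne]; [lra|].
  destruct (mvt f f' a b) as [c [Hc E]]; auto; try lra.
  specialize (P c Hc). nra. Qed.

Lemma incr_lt f f' a b : a < b -> (forall c, a <= c <= b -> derivable_pt_lim f c (f' c)) ->
  (forall c, a < c < b -> 0 < f' c) -> f a < f b.
Proof. intros Hab D P.
  destruct (mvt f f' a b) as [c [Hc E]]; auto; try lra.
  specialize (P c Hc). nra. Qed.

Lemma zero_deriv_const f f' : (forall c, derivable_pt_lim f c (f' c)) -> (forall c, f' c = 0) ->
  forall x y, f x = f y.
Proof. intros D Z x y.
  assert (K : forall a b, a < b -> f a = f b).
  { intros a b Hab. assert (HD : forall c, a <= c <= b -> derivable_pt_lim f c (f' c)) by (intros; apply D).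
    destruct (mvt f f' a b Hab HD) as [c [Hc E]]. rewrite (Z c) in E. lra. }
  destruct (Rtotal_order x y) as [H|[H|H]]; auto. subst; auto. symmetry; apply K; lra. Qed.

Lemma tp_mult0 f g : tends_pinf f 0 -> tends_pinf g 0 -> tends_pinf (fun z => f z * g z) 0.
Proof. intros F G eps He. destruct (F 1 Rlt_0_1) as [A1 H1]. destruct (G eps He) as [A2 H2].
  exists (Rmax A1 A2). intros z Hz. specialize (H1 z (Rle_trans _ _ _ (Rmax_l _ _) Hz)).
  specialize (H2 z (Rle_trans _ _ _ (Rmax_r _ _) Hz)). rewrite Rminus_0_r in *.
  rewrite Rabs_mult. assert (0 <= Rabs (f z)) by apply Rabs_pos. assert (0 <= Rabs (g z)) by apply Rabs_pos. nra. Qed.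

Lemma tm_mult0 f g : tends_minf f 0 -> tends_minf g 0 -> tends_minf (fun z => f z * g z) 0.
Proof. intros F G eps He. destruct (F 1 Rlt_0_1) as [A1 H1]. destruct (G eps He) as [A2 H2].
  exists (Rmin A1 A2). intros z Hz. specialize (H1 z (Rle_trans _ _ _ Hz (Rmin_l _ _))).
  specialize (H2 z (Rle_trans _ _ _ Hz (Rmin_r _ _))). rewrite Rminus_0_r in *.
  rewrite Rabs_mult. assert (0 <= Rabs (f z)) by apply Rabs_pos. assert (0 <= Rabs (g z)) by apply Rabs_pos. nra. Qed.

Lemma tp_minus0 f g : tends_pinf f 0 -> tends_pinf g 0 -> tends_pinf (fun z => f z - g z) 0.
Proof. intros F G eps He. destruct (F (eps/2)) as [A1 H1]; [lra|]. destruct (G (eps/2)) as [A2 H2]; [lra|].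
  exists (Rmax A1 A2). intros z Hz. specialize (H1 z (Rle_trans _ _ _ (Rmax_l _ _) Hz)).
  specialize (H2 z (Rle_trans _ _ _ (Rmax_r _ _) Hz)). rewrite Rminus_0_r in *.
  apply Rabs_def2 in H1; apply Rabs_def2 in H2. apply Rabs_def1; lra. Qed.

Lemma tm_minus0 f g : tends_minf f 0 -> tends_minf g 0 -> tends_minf (fun z => f z - g z) 0.
Proof. intros F G eps He. destruct (F (eps/2)) as [A1 H1]; [lra|]. destruct (G (eps/2)) as [A2 H2]; [lra|].
  exists (Rmin A1 A2). intros z Hz. specialize (H1 z (Rle_trans _ _ _ Hz (Rmin_l _ _))).
  specialize (H2 z (Rle_trans _ _ _ Hz (Rmin_r _ _))). rewrite Rminus_0_r in *.
  apply Rabs_def2 in H1; apply Rabs_def2 in H2. apply Rabs_def1; lra. Qed.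

Lemma tp_opp f : tends_pinf f 0 -> tends_pinf (fun z => - f z) 0.
Proof. intros F eps He. destruct (F eps He) as [A H]. exists A. intros z Hz. specialize (H z Hz).
  rewrite Rminus_0_r in *. rewrite Rabs_Ropp; auto. Qed.
Lemma tm_opp f : tends_minf f 0 -> tends_minf (fun z => - f z) 0.
Proof. intros F eps He. destruct (F eps He) as [A H]. exists A. intros z Hz. specialize (H z Hz).
  rewrite Rminus_0_r in *. rewrite Rabs_Ropp; auto. Qed.

Lemma tp_refl f l : tends_minf f l -> tends_pinf (fun z => f (- z)) l.
Proof. intros F eps He. destruct (F eps He) as [A H]. exists (- A). intros z Hz. apply H; lra. Qed.
Lemma tm_refl f l : tends_pinf f l -> tends_minf (fun z => f (- z)) l.
Proof. intros F eps He. destruct (F eps He) as [A H]. exists (- A). intros z Hz. apply H; lra. Qed.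

Lemma tp_ext f g l : (forall z, f z = g z) -> tends_pinf f l -> tends_pinf g l.
Proof. intros E F eps He. destruct (F eps He) as [A H]. exists A; intros; rewrite <- E; auto. Qed.
Lemma tm_ext f g l : (forall z, f z = g z) -> tends_minf f l -> tends_minf g l.
Proof. intros E F eps He. destruct (F eps He) as [A H]. exists A; intros; rewrite <- E; auto. Qed.

Lemma posderiv_false W W' : (forall z, derivable_pt_lim W z (W' z)) -> (forall z, 0 < W' z) ->
  tends_pinf W 0 -> tends_minf W 0 -> False.
Proof.
  intros D P Tp Tm. assert (H01 : W 0 < W 1) by (apply (incr_lt W W'); auto; lra).
  destruct (Tp ((W 1 - W 0)/2)) as [A HA]; [lra|]. destruct (Tm ((W 1 - W 0)/2)) as [B HB]; [lra|].
  assert (h1 : W 1 <= W (Rmax A 1)) by (apply (incr_le W W'); auto; [apply Rmax_r | intros; left; auto]).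
  assert (h2 : W (Rmin B 0) <= W 0) by (apply (incr_le W W'); auto; [apply Rmin_r | intros; left; auto]).
  specialize (HA (Rmax A 1) (Rmax_l _ _)). specialize (HB (Rmin B 0) (Rmin_l _ _)).
  rewrite Rminus_0_r in *. apply Rabs_def2 in HA; apply Rabs_def2 in HB. lra.
Qed.

Lemma first_zero f a b : (forall x, a <= x <= b -> continuity_pt f x) -> a < b -> 0 < f a -> f b <= 0 ->
  exists T, a < T <= b /\ f T = 0 /\ forall y, a <= y < T -> 0 < f y.
Proof.
  intros C Hab Ha Hb.
  set (E := fun x => a <= x <= b /\ forall y, a <= y <= x -> 0 < f y).
  assert (BE : bound E) by (exists b; intros x [Hx _]; lra).
  assert (EE : exists x, E x) by (exists a; split; [lra| intros y Hy; replace y with a by lra; auto]).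
  destruct (completeness E BE EE) as [T [HT1 HT2]].
  assert (HaT : a <= T) by (apply HT1; destruct EE; unfold E; split; [lra| intros y Hy; replace y with a by lra; auto]).
  assert (HTb : T <= b) by (apply HT2; intros x [Hx _]; lra).
  assert (below : forall y, a <= y < T -> 0 < f y).
  { intros y Hy. destruct (classic (exists x, E x /\ y < x)) as [[x [[Hx1 Hx2] Hyx]]|N].
    - apply Hx2; lra.
    - exfalso. assert (T <= y); [|lra]. apply HT2. intros x Ex. destruct (Rle_lt_dec x y); auto.
      exfalso; apply N; exists x; auto. }
  assert (fT : f T = 0).
  { destruct (Rtotal_order (f T) 0) as [Hn|[Hz|Hp]]; auto.
    - exfalso. destruct (cont_neg f T (C T (conj HaT HTb)) Hn) as [d [Hd Hy]].
      destruct (Req_dec T a) as [->|HTa]; [lra|].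
      set (y := Rmax a (T - d/2)). assert (a <= y < T) by (unfold y; split; [apply Rmax_l| apply Rmax_lub_lt; lra]).
      specialize (below y H). assert (f y < 0); [|lra]. apply Hy. unfold y.
      destruct (Rle_dec a (T - d/2)); [rewrite Rmax_right|rewrite Rmax_left]; try lra; apply Rabs_def1; lra.
    - exfalso. destruct (Req_dec T b) as [->|HTb']; [lra|].
      destruct (cont_pos f T (C T (conj HaT HTb)) Hp) as [d [Hd Hy]].
      set (y := Rmin b (T + d/2)). assert (E y).
      { unfold E, y. split; [split; [apply Rmin_glb; lra| apply Rmin_l]|].
        intros z Hz. destruct (Rlt_dec z T); [apply below; lra|]. apply Hy.
        assert (z <= T + d/2) by (apply Rle_trans with (1 := proj2 Hz); apply Rmin_r).
        apply Rabs_def1; lra. }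
      specialize (HT1 y H). unfold y in HT1. destruct (Rle_dec b (T + d/2));
      [rewrite Rmin_left in HT1 | rewrite Rmin_right in HT1]; lra. }
  exists T. split; [|split; auto]. split; auto. destruct (Req_dec T a) as [->|]; [lra|lra].
Qed.

Lemma last_zero f a b : (forall x, a <= x <= b -> continuity_pt f x) -> a < b -> f a <= 0 -> 0 < f b ->
  exists T, a <= T < b /\ f T = 0 /\ forall y, T < y <= b -> 0 < f y.
Proof.
  intros C Hab Ha Hb.
  destruct (first_zero (fun y => f (- y)) (- b) (- a)) as [T [H1 [H2 H3]]]; try lra.
  - intros x Hx. apply (continuity_pt_comp (fun y => - y) f x).
    + apply derivable_continuous_pt. exists (-1). apply dlim_eq with (- 1); [apply dopp, did| auto].
    + apply C; lra.
  - replace (- - b) with b by ring; auto.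
  - replace (- - a) with a by ring; auto.
  - exists (- T). split; [lra|split; auto]. intros y Hy. replace y with (- - y) by ring. apply H3; lra.
Qed.

Lemma bound_compact f a b : a <= b -> (forall x, continuity_pt f x) -> exists B, forall x, a <= x <= b -> Rabs (f x) <= B.
Proof. intros Hab C.
  destruct (continuity_ab_maj (fun x => Rabs (f x)) a b Hab) as [m [Hm _]].
  - intros c _. apply (continuity_pt_comp f Rabs c (C c)). apply Rcontinuity_abs.
  - exists (Rabs (f m)). intros; apply Hm; auto. Qed.

Lemma bound_global f : (forall x, continuity_pt f x) -> tends_pinf f 0 -> tends_minf f 0 ->
  exists B, forall x, Rabs (f x) <= B.
Proof. intros C Tp Tm. destruct (Tp 1 Rlt_0_1) as [A1 H1]. destruct (Tm 1 Rlt_0_1) as [A2 H2].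
  destruct (bound_compact f (Rmin A1 A2) (Rmax A1 A2)) as [B HB]; auto.
  { apply Rle_trans with A1; [apply Rmin_l|apply Rmax_l]. }
  exists (Rmax 1 B). intros x. destruct (Rle_dec A1 x) as [h|h].
  - specialize (H1 x h). rewrite Rminus_0_r in H1. apply Rle_trans with 1; [lra|apply Rmax_l].
  - destruct (Rle_dec x A2) as [h'|h'].
    + specialize (H2 x h'). rewrite Rminus_0_r in H2. apply Rle_trans with 1; [lra|apply Rmax_l].
    + apply Rle_trans with B; [|apply Rmax_r]. apply HB. split.
      * apply Rle_trans with A2; [apply Rmin_r|lra].
      * apply Rle_trans with A1; [lra|apply Rmax_l].
Qed.

Lemma ode_uniq M M1 M2 q z0 : (forall z, derivable_pt_lim M z (M1 z)) -> (forall z, derivable_pt_lim M1 z (M2 z)) ->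
  (forall z, M2 z = q z * M z) -> (forall z, continuity_pt q z) -> M z0 = 0 -> M1 z0 = 0 -> forall z, M z = 0.
Proof.
  intros D1 D2 Eq Cq H0 H1 z.
  destruct (bound_compact q (Rmin z z0) (Rmax z z0)) as [C HC]; auto.
  { apply Rle_trans with z; [apply Rmin_l|apply Rmax_l]. }
  set (K := 1 + Rabs C).
  set (E := fun t => M t ^ 2 + M1 t ^ 2).
  set (E' := fun t => 2 * M t * M1 t + 2 * M1 t * (q t * M t)).
  assert (DE : forall t, derivable_pt_lim E t (E' t)).
  { intros t. unfold E, E'. apply dlim_eq with (2 * M t * M1 t + 2 * M1 t * M2 t).
    - apply dplus.
      + apply dlim_ext with (fun y => M y * M y); [intros; ring|]. apply dlim_eq with (M1 t * M t + M t * M1 t);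
        [apply dmult; auto| ring].
      + apply dlim_ext with (fun y => M1 y * M1 y); [intros; ring|]. apply dlim_eq with (M2 t * M1 t + M1 t * M2 t);
        [apply dmult; auto| ring].
    - rewrite Eq; ring. }
  assert (Eb : forall t, Rmin z z0 <= t <= Rmax z z0 -> Rabs (E' t) <= K * E t).
  { intros t Ht. specialize (HC t Ht). unfold E', E, K.
    assert (Rabs (q t) <= Rabs C) by (apply Rle_trans with C; [auto|apply Rle_abs]).
    assert (0 <= Rabs (q t)) by apply Rabs_pos.
    replace (2 * M t * M1 t + 2 * M1 t * (q t * M t)) with (2 * M t * M1 t * (1 + q t)) by ring.
    rewrite !Rabs_mult. rewrite (Rabs_right 2) by lra.
    assert (Rabs (1 + q t) <= 1 + Rabs C).
    { apply Rle_trans with (Rabs 1 + Rabs (q t)); [apply Rabs_triang| rewrite Rabs_R1; lra]. }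
    assert (HAB : 2 * Rabs (M t) * Rabs (M1 t) <= M t ^ 2 + M1 t ^ 2).
    { assert (e1 : Rabs (M t) * Rabs (M t) = M t * M t) by (rewrite <- Rabs_mult; apply Rabs_right; nra).
      assert (e2 : Rabs (M1 t) * Rabs (M1 t) = M1 t * M1 t) by (rewrite <- Rabs_mult; apply Rabs_right; nra).
      pose proof (pow2_ge_0 (Rabs (M t) - Rabs (M1 t))). simpl in *. nra. }
    assert (p1 : 0 <= Rabs (M t)) by apply Rabs_pos. assert (p2 : 0 <= Rabs (M1 t)) by apply Rabs_pos.
    assert (p3 : 0 <= Rabs C) by apply Rabs_pos. assert (p4 : 0 <= Rabs (1 + q t)) by apply Rabs_pos.
    apply Rle_trans with (2 * Rabs (M t) * Rabs (M1 t) * (1 + Rabs C)).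
    - apply Rmult_le_compat_l; nra.
    - apply Rmult_le_compat_r with (r := 1 + Rabs C) in HAB; lra. }
  assert (Epos : forall t, 0 <= E t) by (intros; unfold E; nra).
  assert (E0 : E z0 = 0) by (unfold E; rewrite H0, H1; ring).
  assert (Ez : E z <= 0).
  { destruct (Rle_dec z0 z) as [Hle|Hlt].
    - set (h := fun t => E t * exp (- K * t)).
      assert (h z <= h z0).
      { assert (- h z0 <= - h z); [|lra].
        apply (incr_le (fun t => - h t) (fun t => - ((E' t - K * E t) * exp (- K * t)))); auto.
        - intros c _. unfold h. apply dopp. apply dlim_eq with (E' c * exp (- K * c) + E c * (exp (- K * c) * (- K * 1))).
          + apply (dmult E (fun t => exp (_ * t))); auto. apply (dexp (fun t => _ * t)). apply (dscal _ (fun t => t)), did.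
          + ring.
        - intros c Hc. assert (Hb := Eb c). rewrite Rmin_right, Rmax_left in Hb by lra.
          specialize (Hb (conj (Rlt_le _ _ (proj1 Hc)) (Rlt_le _ _ (proj2 Hc)))).
          apply Rabs_def2b in Hb || idtac. pose proof (exp_pos (- K * c)).
          assert (E' c - K * E c <= 0) by (pose proof (Rle_abs (E' c)); lra). nra. }
      unfold h in H. rewrite E0 in H. pose proof (exp_pos (- K * z)). nra.
    - set (h := fun t => E t * exp (K * t)).
      assert (h z <= h z0).
      { apply (incr_le h (fun t => ((E' t + K * E t) * exp (K * t)))); [lra| |].
        - intros c _. unfold h. apply dlim_eq with (E' c * exp (K * c) + E c * (exp (K * c) * (K * 1))).
          + apply (dmult E (fun t => exp (_ * t))); auto. apply (dexp (fun t => _ * t)). apply (dscal _ (fun t => t)), did.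
          + ring.
        - intros c Hc. assert (Hb := Eb c). rewrite Rmin_left, Rmax_right in Hb by lra.
          specialize (Hb (conj (Rlt_le _ _ (proj1 Hc)) (Rlt_le _ _ (proj2 Hc)))).
          pose proof (exp_pos (K * c)).
          assert (0 <= E' c + K * E c) by (pose proof (Rle_abs (- E' c)) as hh; rewrite Rabs_Ropp in hh; lra). nra. }
      unfold h in H. rewrite E0 in H. pose proof (exp_pos (K * z)). nra. }
  assert (E z = 0) by (specialize (Epos z); lra). unfold E in H. nra.
Qed.

Definition sol (q M M1 M2 : R -> R) : Prop :=
  (forall z, derivable_pt_lim M z (M1 z)) /\ (forall z, derivable_pt_lim M1 z (M2 z)) /\
  (forall z, M2 z = q z * M z) /\ tends_pinf M 0 /\ tends_minf M 0 /\ tends_pinf M1 0 /\ tends_minf M1 0.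

Lemma sol_opp q M M1 M2 : sol q M M1 M2 -> sol q (fun z => - M z) (fun z => - M1 z) (fun z => - M2 z).
Proof. intros [D1 [D2 [E [T1 [T2 [T3 T4]]]]]]. repeat split.
  - intros; apply dopp; auto. - intros; apply dopp; auto. - intros; rewrite E; ring.
  - apply tp_opp; auto. - apply tm_opp; auto. - apply tp_opp; auto. - apply tm_opp; auto. Qed.

Lemma dlim_refl f x l : derivable_pt_lim f (- x) l -> derivable_pt_lim (fun y => f (- y)) x (- l).
Proof. intros D. apply dlim_eq with (l * - 1); [|ring]. apply (dcomp (fun y => - y) f).
  - apply dopp, did. - auto. Qed.

Lemma sol_refl q M M1 M2 : sol q M M1 M2 ->
  sol (fun z => q (- z)) (fun z => M (- z)) (fun z => - M1 (- z)) (fun z => M2 (- z)).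
Proof. intros [D1 [D2 [E [T1 [T2 [T3 T4]]]]]]. repeat split.
  - intros; apply dlim_refl; auto.
  - intros z. apply dlim_eq with (- - M2 (- z)); [|ring]. apply dopp. apply dlim_refl; auto.
  - intros; rewrite E; ring.
  - apply tp_refl; auto. - apply tm_refl; auto.
  - apply tp_refl with (f := fun z => - M1 z). apply tm_opp; auto.
  - apply tm_refl with (f := fun z => - M1 z). apply tp_opp; auto. Qed.

Section Sturm.
Variables (q q0 M M1 M2 phi phi1 phi2 : R -> R).
Hypothesis (HM : sol q M M1 M2) (Hphi : sol q0 phi phi1 phi2) (Hq : forall z, q0 z < q z).

Let U := fun z => M1 z * phi z - M z * phi1 z.
Let U' := fun z => (q z - q0 z) * M z * phi z.

Lemma DU : forall t, derivable_pt_lim U t (U' t).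
Proof. destruct HM as [D1 [D2 [E _]]]. destruct Hphi as [P1 [P2 [F _]]].
  intros t. unfold U, U'. apply dlim_eq with ((M2 t * phi t + M1 t * phi1 t) - (M1 t * phi1 t + M t * phi2 t)).
  - apply dminus; apply dmult; auto.
  - rewrite E, F. ring. Qed.

Lemma TUp : tends_pinf U 0.
Proof. destruct HM as [_ [_ [_ [T1 [T2 [T3 T4]]]]]]. destruct Hphi as [_ [_ [_ [P1 [P2 [P3 P4]]]]]].
  apply tp_minus0; apply tp_mult0; auto. Qed.

Lemma contM : forall x, continuity_pt M x.
Proof. destruct HM as [D1 _]. intros; apply (dlim_cont M x (M1 x)); auto. Qed.

Lemma claim1 c z1 : (forall z, c < z -> 0 < phi z) -> c < z1 -> 0 < M z1 -> U z1 < 0.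
Proof.
  intros Pp Hz1 Mz1. destruct HM as [D1 _]. destruct Hphi as [P1 _].
  apply Rnot_le_lt. intros U0.
  destruct (classic (exists t, z1 < t /\ M t <= 0)) as [[t [Ht Mt]]|N].
  - destruct (first_zero M z1 t) as [T [HT [MT Mpos]]]; auto. { intros; apply contM. }
    set (v := fun y => M y / phi y).
    destruct (mvt v (fun y => (M1 y * phi y - phi1 y * M y) / (phi y)^2) z1 T) as [xi [Hxi Exi]]; try lra.
    { intros y Hy. unfold v. apply ddiv; auto. assert (0 < phi y) by (apply Pp; lra). lra. }
    unfold v in Exi. rewrite MT in Exi. assert (0 < phi z1) by (apply Pp; lra).
    assert (0 < phi xi) by (apply Pp; lra).
    assert (M z1 / phi z1 > 0) by (apply Rdiv_lt_0_compat; auto).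
    assert (Hneg : (M1 xi * phi xi - phi1 xi * M xi) / phi xi ^ 2 < 0).
    { assert (0 / phi T - M z1 / phi z1 < 0) by (unfold Rdiv at 1; rewrite Rmult_0_l; lra).
      rewrite Exi in H2. assert (0 < T - z1) by lra. nra. }
    assert (Uxi : U xi < 0).
    { unfold U. assert (0 < phi xi ^ 2) by (apply pow_lt; auto).
      apply Rmult_lt_compat_r with (r := phi xi ^ 2) in Hneg; auto. unfold Rdiv in Hneg.
      rewrite Rmult_assoc, Rinv_l in Hneg by lra. lra. }
    assert (U z1 < U xi).
    { apply (incr_lt U U'); try lra. { intros; apply DU. }
      intros y Hy. unfold U'. assert (0 < q y - q0 y) by (specialize (Hq y); lra).
      assert (0 < M y) by (apply Mpos; lra). assert (0 < phi y) by (apply Pp; lra).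
      apply Rmult_lt_0_compat; [apply Rmult_lt_0_compat|]; auto. }
    lra.
  - assert (Mp : forall t, z1 <= t -> 0 < M t).
    { intros t Ht. destruct (Req_dec t z1) as [->|]; auto. apply Rnot_le_lt; intro; apply N; exists t; split; lra. }
    assert (U'p : forall y, z1 <= y -> 0 < U' y).
    { intros y Hy. unfold U'. assert (0 < q y - q0 y) by (specialize (Hq y); lra).
      assert (0 < M y) by (apply Mp; lra). assert (0 < phi y) by (apply Pp; lra).
      apply Rmult_lt_0_compat; [apply Rmult_lt_0_compat|]; auto. }
    assert (H1 : U z1 < U (z1 + 1)) by (apply (incr_lt U U'); try lra; [intros; apply DU| intros; apply U'p; lra]).
    destruct (TUp (U (z1 + 1))) as [A HA]; [lra|].
    assert (H2 : U (z1 + 1) <= U (Rmax A (z1 + 1))).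
    { apply (incr_le U U'); [apply Rmax_r| intros; apply DU| intros; left; apply U'p; lra]. }
    specialize (HA (Rmax A (z1 + 1)) (Rmax_l _ _)). rewrite Rminus_0_r in HA. apply Rabs_def2 in HA. lra.
Qed.

Lemma claim2pos c z0 z1 : (forall z, c < z -> 0 < phi z) -> c < z0 -> M z0 = 0 -> z0 < z1 -> M z1 <= 0.
Proof.
  intros Pp Hz0 Mz0 Hz1. destruct HM as [D1 _]. destruct Hphi as [P1 _].
  apply Rnot_lt_le. intros Mz1.
  destruct (last_zero M z0 z1) as [T [HT [MT Mpos]]]; auto; try lra. { intros; apply contM. }
  set (v := fun y => M y / phi y).
  destruct (mvt v (fun y => (M1 y * phi y - phi1 y * M y) / (phi y)^2) T z1) as [xi [Hxi Exi]]; try lra.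
  { intros y Hy. unfold v. apply ddiv; auto. assert (0 < phi y) by (apply Pp; lra). lra. }
  unfold v in Exi. rewrite MT in Exi. assert (0 < phi z1) by (apply Pp; lra).
  assert (0 < phi xi) by (apply Pp; lra).
  assert (M z1 / phi z1 > 0) by (apply Rdiv_lt_0_compat; auto).
  assert (Hpos : (M1 xi * phi xi - phi1 xi * M xi) / phi xi ^ 2 > 0).
  { assert (M z1 / phi z1 - 0 / phi T > 0) by (unfold Rdiv at 2; rewrite Rmult_0_l; lra).
    rewrite Exi in H2. assert (0 < z1 - T) by lra. nra. }
  assert (Uxi : 0 < U xi).
  { unfold U. assert (0 < phi xi ^ 2) by (apply pow_lt; auto).
    apply Rmult_lt_compat_r with (r := phi xi ^ 2) in Hpos; auto. unfold Rdiv in Hpos.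
    rewrite Rmult_assoc, Rinv_l in Hpos by lra. lra. }
  assert (U xi < 0) by (apply (claim1 c xi); auto; try lra; apply Mpos; lra). lra.
Qed.

Lemma claim3 c : (forall z, c < z -> 0 < phi z) -> phi c = 0 -> M c = 0 -> (forall z, c < z -> 0 < M z) -> False.
Proof.
  intros Pp Pc Mc Mp.
  assert (U (c + 1) < 0) by (apply (claim1 c); auto; try lra; apply Mp; lra).
  assert (U c < U (c + 1)).
  { apply (incr_lt U U'); try lra. { intros; apply DU. }
    intros y Hy. unfold U'. assert (0 < q y - q0 y) by (specialize (Hq y); lra).
    assert (0 < M y) by (apply Mp; lra). assert (0 < phi y) by (apply Pp; lra).
    apply Rmult_lt_0_compat; [apply Rmult_lt_0_compat|]; auto. }
  unfold U in H0. rewrite Pc, Mc in H0. unfold U in H. lra.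
Qed.

End Sturm.

Lemma onesign f c : (forall x, continuity_pt f x) -> (forall z, c < z -> f z <> 0) ->
  (forall z, c < z -> 0 < f z) \/ (forall z, c < z -> f z < 0).
Proof.
  intros C N. assert (Cf : continuity f) by (intros x; apply C).
  destruct (Rlt_dec 0 (f (c + 1))) as [Hp|Hn].
  - left. intros z Hz. apply Rnot_le_lt. intros Hle. 
    destruct (Rle_dec z (c + 1)).
    + destruct (IVT_cor f z (c + 1) Cf r) as [y [Hy Fy]]; [nra|]. apply (N y); auto; lra.
    + destruct (IVT_cor f (c + 1) z Cf) as [y [Hy Fy]]; [lra|nra|]. apply (N y); auto; lra.
  - assert (f (c + 1) < 0) by (assert (f (c+1) <> 0) by (apply N; lra); lra). right. intros z Hz. apply Rnot_le_lt. intros Hle.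
    destruct (Rle_dec z (c + 1)).
    + destruct (IVT_cor f z (c + 1) Cf r) as [y [Hy Fy]]; [nra|]. apply (N y); auto; lra.
    + destruct (IVT_cor f (c + 1) z Cf) as [y [Hy Fy]]; [lra|nra|]. apply (N y); auto; lra.
Qed.

Lemma onesign_all f : (forall x, continuity_pt f x) -> (forall z, f z <> 0) ->
  (forall z, 0 < f z) \/ (forall z, f z < 0).
Proof.
  intros C N. assert (Cf : continuity f) by (intros x; apply C).
  destruct (Rlt_dec 0 (f 0)) as [Hp|Hn].
  - left. intros z. apply Rnot_le_lt. intros Hle. 
    destruct (Rle_dec z 0).
    + destruct (IVT_cor f z 0 Cf r) as [y [Hy Fy]]; [nra|]. apply (N y); auto.
    + destruct (IVT_cor f 0 z Cf) as [y [Hy Fy]]; [lra|nra|]. apply (N y); auto.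
  - assert (f 0 < 0) by (assert (f 0 <> 0) by (apply N); lra). right. intros z. apply Rnot_le_lt. intros Hle.
    destruct (Rle_dec z 0).
    + destruct (IVT_cor f z 0 Cf r) as [y [Hy Fy]]; [nra|]. apply (N y); auto.
    + destruct (IVT_cor f 0 z Cf) as [y [Hy Fy]]; [lra|nra|]. apply (N y); auto.
Qed.

Lemma sol_cont q M M1 M2 : sol q M M1 M2 -> forall x, continuity_pt M x.
Proof. intros [D _] x. apply (dlim_cont M x (M1 x)); auto. Qed.

Lemma right_vanish q q0 M M1 M2 phi phi1 phi2 c z0 :
  sol q M M1 M2 -> sol q0 phi phi1 phi2 -> (forall z, q0 z < q z) ->
  (forall z, c < z -> phi z <> 0) -> c < z0 -> M z0 = 0 -> forall z, z0 <= z -> M z = 0.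
Proof.
  intros HM Hphi Hq Pn Hz0 Mz0.
  assert (K : forall p p1 p2, sol q0 p p1 p2 -> (forall z, c < z -> 0 < p z) -> forall z, z0 <= z -> M z = 0).
  { intros p p1 p2 Hp Pp z Hz. destruct (Req_dec z z0) as [->|Hne]; auto.
    assert (a1 : M z <= 0) by (apply (claim2pos q q0 M M1 M2 p p1 p2 HM Hp Hq c z0); auto; lra).
    assert (a2 : - M z <= 0).
    { apply (claim2pos q q0 (fun z => - M z) (fun z => - M1 z) (fun z => - M2 z) p p1 p2 (sol_opp _ _ _ _ HM) Hp Hq c z0 z); auto; try lra; rewrite Mz0; ring. }
    lra. }
  destruct (onesign phi c (sol_cont _ _ _ _ Hphi) Pn) as [P|P].
  - apply (K phi phi1 phi2); auto.
  - apply (K (fun z => - phi z) (fun z => - phi1 z) (fun z => - phi2 z)); [apply sol_opp; auto|].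
    intros z Hz; specialize (P z Hz); lra.
Qed.

Lemma right_triv q q0 M M1 M2 phi phi1 phi2 c z0 :
  sol q M M1 M2 -> sol q0 phi phi1 phi2 -> (forall z, q0 z < q z) -> (forall z, continuity_pt q z) ->
  (exists z, M z <> 0) ->
  (forall z, c < z -> phi z <> 0) -> c < z0 -> M z0 = 0 -> False.
Proof.
  intros HM Hphi Hq Cq [zz Hzz] Pn Hz0 Mz0.
  assert (V := right_vanish q q0 M M1 M2 phi phi1 phi2 c z0 HM Hphi Hq Pn Hz0 Mz0).
  destruct HM as [D1 [D2 [E _]]].
  assert (M1 (z0 + 1) = 0).
  { apply (dlim_locconst M (z0 + 1) (M1 (z0 + 1)) 1 0); auto; try lra.
    intros y Hy. apply V. apply Rabs_def2 in Hy. lra. }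
  apply Hzz. apply (ode_uniq M M1 M2 q (z0 + 1)); auto. apply V; lra.
Qed.

Lemma left_triv q q0 M M1 M2 phi phi1 phi2 c z0 :
  sol q M M1 M2 -> sol q0 phi phi1 phi2 -> (forall z, q0 z < q z) -> (forall z, continuity_pt q z) ->
  (exists z, M z <> 0) ->
  (forall z, z < c -> phi z <> 0) -> z0 < c -> M z0 = 0 -> False.
Proof.
  intros HM Hphi Hq Cq [zz Hzz] Pn Hz0 Mz0.
  apply (right_triv _ _ _ _ _ _ _ _ (- c) (- z0) (sol_refl _ _ _ _ HM) (sol_refl _ _ _ _ Hphi)).
  - intros; apply Hq.
  - intros z. apply (continuity_pt_comp (fun y => - y) q z).
    + apply (dlim_cont _ z (- 1)). apply dopp, did.
    + apply Cq.
  - exists (- zz). rewrite Ropp_involutive; auto.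
  - intros z Hz. apply Pn. lra.
  - lra.
  - rewrite Ropp_involutive; auto.
Qed.

Lemma center_case q q0 M M1 M2 phi phi1 phi2 c :
  sol q M M1 M2 -> sol q0 phi phi1 phi2 -> (forall z, q0 z < q z) ->
  phi c = 0 -> (forall z, c < z -> phi z <> 0) -> M c = 0 -> (forall z, c < z -> M z <> 0) -> False.
Proof.
  intros HM Hphi Hq Pc Pn Mc Mn.
  assert (K : forall m m1 m2, sol q m m1 m2 -> m c = 0 -> (forall z, c < z -> 0 < m z) -> False).
  { intros m m1 m2 Hm mc mp.
    destruct (onesign phi c (sol_cont _ _ _ _ Hphi) Pn) as [P|P].
    - apply (claim3 q q0 m m1 m2 phi phi1 phi2 Hm Hphi Hq c); auto.
    - apply (claim3 q q0 m m1 m2 (fun z => - phi z) (fun z => - phi1 z) (fun z => - phi2 z) Hm (sol_opp _ _ _ _ Hphi) Hq c); auto.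
      + intros z Hz; specialize (P z Hz); lra.
      + rewrite Pc; ring. }
  destruct (onesign M c (sol_cont _ _ _ _ HM) Mn) as [P|P].
  - apply (K M M1 M2); auto.
  - apply (K (fun z => - M z) (fun z => - M1 z) (fun z => - M2 z)); [apply sol_opp; auto| rewrite Mc; ring|].
    intros z Hz; specialize (P z Hz); lra.
Qed.

Lemma nozero q q0 M M1 M2 phi phi1 phi2 :
  sol q M M1 M2 -> sol q0 phi phi1 phi2 -> (forall z, q0 z < q z) -> (forall z, continuity_pt q z) ->
  (exists z, M z <> 0) -> (forall a b, phi a = 0 -> phi b = 0 -> a = b) -> forall z, M z <> 0.
Proof.
  intros HM Hphi Hq Cq Nt Uq z0 Mz0.
  destruct (classic (exists c, phi c = 0)) as [[c Pc]|NP].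
  - assert (Pn : forall z, z <> c -> phi z <> 0) by (intros z Hz Pz; apply Hz; apply Uq; auto).
    destruct (Rtotal_order z0 c) as [Hl|[He|Hg]].
    + apply (left_triv q q0 M M1 M2 phi phi1 phi2 c z0); auto. intros z Hz; apply Pn; lra.
    + subst z0. destruct (classic (exists z1, c < z1 /\ M z1 = 0)) as [[z1 [Hz1 Mz1]]|NM].
      * apply (right_triv q q0 M M1 M2 phi phi1 phi2 c z1); auto. intros z Hz; apply Pn; lra.
      * apply (center_case q q0 M M1 M2 phi phi1 phi2 c); auto. intros z Hz; apply Pn; lra.
        intros z Hz Mz. apply NM. exists z; auto.
    + apply (right_triv q q0 M M1 M2 phi phi1 phi2 c z0); auto. intros z Hz; apply Pn; lra.
  - apply (right_triv q q0 M M1 M2 phi phi1 phi2 (z0 - 1) z0); auto; try lra.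
    intros z _ Pz; apply NP; exists z; auto.
Qed.

Lemma two_eig qa qb Ma Ma1 Ma2 Mb Mb1 Mb2 :
  sol qa Ma Ma1 Ma2 -> sol qb Mb Mb1 Mb2 -> (forall z, qb z < qa z) ->
  (forall z, Ma z <> 0) -> (forall z, Mb z <> 0) -> False.
Proof.
  intros HA HB Hq Na Nb.
  assert (CP : forall x, continuity_pt (fun z => Ma z * Mb z) x).
  { intros x. apply (continuity_pt_mult Ma Mb x); eapply sol_cont; eauto. }
  destruct HA as [A1 [A2 [AE [AT1 [AT2 [AT3 AT4]]]]]]. destruct HB as [B1 [B2 [BE [BT1 [BT2 [BT3 BT4]]]]]].
  set (W := fun z => Ma1 z * Mb z - Ma z * Mb1 z).
  set (W' := fun z => (qa z - qb z) * (Ma z * Mb z)).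
  assert (DW : forall z, derivable_pt_lim W z (W' z)).
  { intros z. unfold W, W'. apply dlim_eq with ((Ma2 z * Mb z + Ma1 z * Mb1 z) - (Ma1 z * Mb1 z + Ma z * Mb2 z)).
    - apply dminus; apply dmult; auto.
    - rewrite AE, BE; ring. }
  assert (TW1 : tends_pinf W 0) by (apply tp_minus0; apply tp_mult0; auto).
  assert (TW2 : tends_minf W 0) by (apply tm_minus0; apply tm_mult0; auto).
  destruct (onesign_all _ CP) as [P|P].
  - intros z. specialize (Na z); specialize (Nb z). intro H; apply Rmult_integral in H; tauto.
  - apply (posderiv_false W W' DW); auto. intros z. unfold W'. specialize (Hq z). specialize (P z).
    apply Rmult_lt_0_compat; lra.
  - apply (posderiv_false (fun z => - W z) (fun z => - W' z)).
    + intros; apply dopp; auto.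
    + intros z. unfold W'. specialize (Hq z). specialize (P z). nra.
    + apply tp_opp; auto.
    + apply tm_opp; auto.
Qed.


Lemma Rpower_pos x y : 0 < Rpower x y.
Proof. unfold Rpower; apply exp_pos. Qed.

Lemma dcont f x : (exists l, derivable_pt_lim f x l) -> continuity_pt f x.
Proof. intros [l H]; apply (dlim_cont f x l H). Qed.

Lemma cont_eps f x eps : continuity_pt f x -> 0 < eps -> exists d, 0 < d /\ forall y, Rabs (y - x) < d -> Rabs (f y - f x) < eps.
Proof.
  intros C P. destruct (C eps P) as [d [Hd Hy]].
  exists d; split; auto. intros y Hyx. destruct (Req_dec y x) as [->|Hne].
  { rewrite Rminus_diag, Rabs_R0; auto. }
  apply (Hy y). split; auto. unfold D_x, no_cond; split; auto.
Qed.

Lemma tp_comp_cont G f : continuity_pt G 0 -> tends_pinf f 0 -> tends_pinf (fun z => G (f z)) (G 0).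
Proof. intros C T eps He. destruct (cont_eps G 0 eps C He) as [d [Hd Hy]].
  destruct (T d Hd) as [A HA]. exists A. intros z Hz. apply Hy. specialize (HA z Hz). auto. Qed.

Lemma tp_const_eq f K : (forall z, f z = K) -> tends_pinf f 0 -> K = 0.
Proof. intros E T. destruct (Req_dec K 0) as [|Hn]; auto. exfalso.
  destruct (T (Rabs K)) as [A HA]. { apply Rabs_pos_lt; auto. }
  specialize (HA A (Rle_refl _)). rewrite E, Rminus_0_r in HA. lra. Qed.

Lemma tp_scal c f : tends_pinf f 0 -> tends_pinf (fun z => c * f z) 0.
Proof. intros T eps He. destruct (T (eps / (Rabs c + 1))) as [A HA].
  { apply Rdiv_lt_0_compat; auto. pose proof (Rabs_pos c); lra. }
  exists A. intros z Hz. specialize (HA z Hz). rewrite Rminus_0_r in *. rewrite Rabs_mult.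
  pose proof (Rabs_pos c). pose proof (Rabs_pos (f z)).
  apply Rle_lt_trans with ((Rabs c + 1) * Rabs (f z)); [nra|].
  apply Rmult_lt_compat_l with (r := Rabs c + 1) in HA; [|lra].
  replace ((Rabs c + 1) * (eps / (Rabs c + 1))) with eps in HA by (field; lra). auto. Qed.
Lemma tm_scal c f : tends_minf f 0 -> tends_minf (fun z => c * f z) 0.
Proof. intros T eps He. destruct (T (eps / (Rabs c + 1))) as [A HA].
  { apply Rdiv_lt_0_compat; auto. pose proof (Rabs_pos c); lra. }
  exists A. intros z Hz. specialize (HA z Hz). rewrite Rminus_0_r in *. rewrite Rabs_mult.
  pose proof (Rabs_pos c). pose proof (Rabs_pos (f z)).
  apply Rle_lt_trans with ((Rabs c + 1) * Rabs (f z)); [nra|].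
  apply Rmult_lt_compat_l with (r := Rabs c + 1) in HA; [|lra].
  replace ((Rabs c + 1) * (eps / (Rabs c + 1))) with eps in HA by (field; lra). auto. Qed.
Lemma tp_plus0 f g : tends_pinf f 0 -> tends_pinf g 0 -> tends_pinf (fun z => f z + g z) 0.
Proof. intros. apply tp_ext with (fun z => f z - (-1 * g z)); [intros; ring|]. apply tp_minus0; auto. apply tp_scal; auto. Qed.
Lemma tm_plus0 f g : tends_minf f 0 -> tends_minf g 0 -> tends_minf (fun z => f z + g z) 0.
Proof. intros. apply tm_ext with (fun z => f z - (-1 * g z)); [intros; ring|]. apply tm_minus0; auto. apply tm_scal; auto. Qed.
Lemma tp_shift f l : tends_pinf f l -> tends_pinf (fun z => f z - l) 0.
Proof. intros T eps He. destruct (T eps He) as [A HA]. exists A; intros; rewrite Rminus_0_r; auto. Qed.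
Lemma tm_shift f l : tends_minf f l -> tends_minf (fun z => f z - l) 0.
Proof. intros T eps He. destruct (T eps He) as [A HA]. exists A; intros; rewrite Rminus_0_r; auto. Qed.

Lemma deriv_tp f f1 f2 : (forall z, derivable_pt_lim f z (f1 z)) -> (forall z, derivable_pt_lim f1 z (f2 z)) ->
  tends_pinf f 0 -> tends_pinf f2 0 -> tends_pinf f1 0.
Proof.
  intros D1 D2 T T2 eps He. destruct (T (eps/4)) as [A1 H1]; [lra|]. destruct (T2 (eps/2)) as [A2 H2]; [lra|].
  exists (Rmax A1 A2). intros z Hz. assert (A1 <= z) by (apply Rle_trans with (2 := Hz); apply Rmax_l).
  assert (A2 <= z) by (apply Rle_trans with (2 := Hz); apply Rmax_r).
  destruct (mvt f f1 z (z + 1)) as [xi [Hxi E1]]; [lra| intros; auto|].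
  destruct (mvt f1 f2 z xi) as [ze [Hze E2]]; [lra| intros; auto|].
  pose proof (H1 z H). pose proof (H1 (z + 1) ltac:(lra)). pose proof (H2 ze ltac:(lra)).
  rewrite Rminus_0_r in *. apply Rabs_def2 in H3; apply Rabs_def2 in H4; apply Rabs_def2 in H5.
  apply Rabs_def1; nra.
Qed.

Lemma deriv_tm f f1 f2 : (forall z, derivable_pt_lim f z (f1 z)) -> (forall z, derivable_pt_lim f1 z (f2 z)) ->
  tends_minf f 0 -> tends_minf f2 0 -> tends_minf f1 0.
Proof.
  intros D1 D2 T T2 eps He. destruct (T (eps/4)) as [A1 H1]; [lra|]. destruct (T2 (eps/2)) as [A2 H2]; [lra|].
  exists (Rmin A1 A2). intros z Hz. assert (z <= A1) by (apply Rle_trans with (1 := Hz); apply Rmin_l).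
  assert (z <= A2) by (apply Rle_trans with (1 := Hz); apply Rmin_r).
  destruct (mvt f f1 (z - 1) z) as [xi [Hxi E1]]; [lra| intros; auto|].
  destruct (mvt f1 f2 xi z) as [ze [Hze E2]]; [lra| intros; auto|].
  pose proof (H1 z H). pose proof (H1 (z - 1) ltac:(lra)). pose proof (H2 ze ltac:(lra)).
  rewrite Rminus_0_r in *. apply Rabs_def2 in H3; apply Rabs_def2 in H4; apply Rabs_def2 in H5.
  apply Rabs_def1; nra.
Qed.

Section Sol.
Variables (g nu kappa eta_inf s : R) (w eta : R -> R) (dw deta : nat -> R -> R).
Hypotheses (Hnu : -1 < nu) (Hkappa : 0 < kappa) (Heta_inf : 0 < eta_inf)
  (Hw0 : forall x, dw O x = w x) (Hwd : forall n x, derivable_pt_lim (dw n) x (dw (S n) x))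
  (He0 : forall x, deta O x = eta x) (Hed : forall n x, derivable_pt_lim (deta n) x (deta (S n) x))
  (Hpos : forall z, 0 < eta z)
  (Hnc : exists z1 z2, w z1 <> w z2 \/ eta z1 <> eta z2)
  (R1 : forall z, s * w z + Rpower eta_inf (-(nu + 2)) - Rpower (eta z) (-(nu + 2)) = 0)
  (R2 : forall z, g * w z - kappa * dw 2%nat z + s * (eta z - eta_inf) = 0)
  (Tw1 : tends_pinf w 0) (Tw2 : tends_minf w 0) (Te1 : tends_pinf eta eta_inf) (Te2 : tends_minf eta eta_inf).

Definition pp (z : R) := (nu + 2) * Rpower (eta z) (-(nu + 3)).
Definition q0 (z : R) := (g - s ^ 2 / pp z) / kappa.

Lemma Dw x : derivable_pt_lim w x (dw 1%nat x).
Proof. apply dlim_ext with (dw O); auto. Qed.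
Lemma Deta x : derivable_pt_lim eta x (deta 1%nat x).
Proof. apply dlim_ext with (deta O); auto. Qed.

Lemma pp_pos z : 0 < pp z.
Proof. unfold pp. apply Rmult_lt_0_compat; [lra| apply Rpower_pos]. Qed.

Lemma Dpp x : derivable_pt_lim pp x ((nu + 2) * ((-(nu+3)) * Rpower (eta x) (-(nu+3) - 1) * deta 1%nat x)).
Proof. unfold pp. apply dscal. apply dpow; auto. apply Deta. Qed.

Lemma cont_pp x : continuity_pt pp x.
Proof. apply dcont. eexists; apply Dpp. Qed.

Lemma cont_q0 x : continuity_pt q0 x.
Proof. unfold q0. apply dcont. eexists.
  apply (ddiv (fun z => g - s ^ 2 / pp z) (fun _ => kappa)); [| apply dconst | lra].
  apply dminus; [apply dconst|]. apply (ddiv (fun _ => s ^ 2) pp); [apply dconst| apply Dpp| pose proof (pp_pos x); lra]. Qed.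

Lemma deta_rel z : s * dw 1%nat z + pp z * deta 1%nat z = 0.
Proof.
  assert (D : derivable_pt_lim (fun z => s * w z + Rpower eta_inf (-(nu + 2)) - Rpower (eta z) (-(nu + 2))) z
     (s * dw 1%nat z + 0 - (-(nu+2)) * Rpower (eta z) (-(nu+2) - 1) * deta 1%nat z)).
  { apply dminus; [apply dplus; [apply dscal, Dw| apply dconst]|]. apply dpow; auto. apply Deta. }
  assert (D0 : derivable_pt_lim (fun z => s * w z + Rpower eta_inf (-(nu + 2)) - Rpower (eta z) (-(nu + 2))) z 0).
  { apply dlim_ext with (fun _ => 0); [intros; rewrite R1; auto| apply dconst]. }
  pose proof (uniqueness_limite _ _ _ _ D D0). unfold pp.
  replace (-(nu+2) - 1) with (-(nu+3)) in H by ring. lra.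
Qed.

Lemma phi_eq z : dw 3%nat z = q0 z * dw 1%nat z.
Proof.
  assert (D : derivable_pt_lim (fun z => g * w z - kappa * dw 2%nat z + s * (eta z - eta_inf)) z
    (g * dw 1%nat z - kappa * dw 3%nat z + s * (deta 1%nat z - 0))).
  { apply dplus; [apply dminus; apply dscal; [apply Dw| apply Hwd]|]. apply dscal. apply dminus; [apply Deta| apply dconst]. }
  assert (D0 : derivable_pt_lim (fun z => g * w z - kappa * dw 2%nat z + s * (eta z - eta_inf)) z 0).
  { apply dlim_ext with (fun _ => 0); [intros; rewrite R2; auto| apply dconst]. }
  pose proof (uniqueness_limite _ _ _ _ D D0). pose proof (deta_rel z). pose proof (pp_pos z).
  unfold q0. assert (E2 : deta 1%nat z = - s * dw 1%nat z / pp z).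
  { apply Rmult_eq_reg_l with (pp z); [|lra]. replace (pp z * (- s * dw 1%nat z / pp z)) with (- s * dw 1%nat z) by (field; lra). lra. }
  rewrite E2 in H. apply Rmult_eq_reg_l with kappa; [|lra].
  replace (kappa * ((g - s ^ 2 / pp z) / kappa * dw 1%nat z)) with (g * dw 1%nat z + s * (- s * dw 1%nat z / pp z)) by (field; lra).
  lra.
Qed.

Lemma dw2_eq z : dw 2%nat z = / kappa * (g * w z + s * (eta z - eta_inf)).
Proof. pose proof (R2 z). apply Rmult_eq_reg_l with kappa; [|lra].
  rewrite <- Rmult_assoc, Rinv_r by lra. lra. Qed.

Lemma T2p : tends_pinf (dw 2%nat) 0.
Proof. apply tp_ext with (fun z => / kappa * (g * w z + s * (eta z - eta_inf))); [intros; rewrite dw2_eq; auto|].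
  apply tp_scal. apply tp_plus0; apply tp_scal; auto. apply tp_shift; auto. Qed.
Lemma T2m : tends_minf (dw 2%nat) 0.
Proof. apply tm_ext with (fun z => / kappa * (g * w z + s * (eta z - eta_inf))); [intros; rewrite dw2_eq; auto|].
  apply tm_scal. apply tm_plus0; apply tm_scal; auto. apply tm_shift; auto. Qed.

Lemma T1p : tends_pinf (dw 1%nat) 0.
Proof. apply (deriv_tp w (dw 1%nat) (dw 2%nat)); auto. apply Dw. apply T2p. Qed.
Lemma T1m : tends_minf (dw 1%nat) 0.
Proof. apply (deriv_tm w (dw 1%nat) (dw 2%nat)); auto. apply Dw. apply T2m. Qed.

Lemma phi_sol : sol q0 (dw 1%nat) (dw 2%nat) (dw 3%nat).
Proof. repeat split; auto. apply phi_eq. apply T1p. apply T1m. apply T2p. apply T2m. Qed.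


Definition AA := Rpower eta_inf (-(nu + 2)).
Definition etaf (x : R) := Rpower (AA + s * x) (- / (nu + 2)).
Definition Ff (x : R) := g * x + s * (etaf x - eta_inf).
Definition Ff' (x : R) := g - s ^ 2 / (nu + 2) * Rpower (AA + s * x) (- / (nu + 2) - 1).
Definition Gf (x : R) := g * x ^ 2 / 2 + (nu + 2) / (nu + 1) * (Rpower (AA + s * x) ((nu + 1) / (nu + 2)) - Rpower AA ((nu + 1) / (nu + 2))) - s * eta_inf * x.

Lemma AA_pos : 0 < AA.
Proof. apply Rpower_pos. Qed.

Lemma dF x : 0 < AA + s * x -> derivable_pt_lim Ff x (Ff' x).
Proof. intros P. unfold Ff, Ff', etaf.
  apply dlim_eq with (g * 1 + s * ((- / (nu + 2)) * Rpower (AA + s * x) (- / (nu + 2) - 1) * (0 + s * 1) - 0)).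
  - apply dplus; [apply (dscal g (fun y => y)), did|]. apply dscal. apply dminus; [|apply dconst].
    apply (dpow (fun y => AA + s * y)); auto. apply (dplus (fun _ => AA) (fun y => s * y)); [apply dconst| apply (dscal s (fun y => y)), did].
  - field. lra. Qed.

Lemma dG x : 0 < AA + s * x -> derivable_pt_lim Gf x (Ff x).
Proof. intros P. unfold Gf, Ff, etaf.
  apply dlim_eq with (g * (2 * x) / 2 + (nu + 2) / (nu + 1) * (((nu + 1) / (nu + 2)) * Rpower (AA + s * x) ((nu + 1) / (nu + 2) - 1) * (0 + s * 1) - 0) - s * eta_inf * 1).
  - apply dminus; [apply dplus|].
    + apply dlim_ext with (fun y => (g / 2) * (y * y)); [intros; field|].
      apply dlim_eq with (g / 2 * (1 * x + x * 1)); [|field]. apply dscal. apply (dmult (fun y => y) (fun y => y)); apply did.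
    + apply dscal. apply dminus; [|apply dconst]. apply (dpow (fun y => AA + s * y)); auto. apply (dplus (fun _ => AA) (fun y => s * y)); [apply dconst| apply (dscal s (fun y => y)), did].
    + apply (dscal _ (fun y => y)), did.
  - replace ((nu + 1) / (nu + 2) - 1) with (- / (nu + 2)) by (field; lra). field. lra. Qed.

Lemma pos_w z : 0 < AA + s * w z.
Proof. pose proof (R1 z). replace (AA + s * w z) with (Rpower (eta z) (-(nu+2))) by (unfold AA; lra).
  apply Rpower_pos. Qed.

Lemma eta_w z : eta z = etaf (w z).
Proof. unfold etaf. replace (AA + s * w z) with (Rpower (eta z) (-(nu+2))) by (pose proof (R1 z); unfold AA; lra).
  rewrite Rpower_mult. replace (- (nu + 2) * - / (nu + 2)) with 1 by (field; lra). rewrite Rpower_1; auto. Qed.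

Lemma etaf0 : etaf 0 = eta_inf.
Proof. unfold etaf, AA. rewrite Rmult_0_r, Rplus_0_r, Rpower_mult.
  replace (- (nu + 2) * - / (nu + 2)) with 1 by (field; lra). rewrite Rpower_1; auto. Qed.

Lemma F0 : Ff 0 = 0.
Proof. unfold Ff. rewrite etaf0. ring. Qed.
Lemma G0 : Gf 0 = 0.
Proof. unfold Gf. replace (AA + s * 0) with AA by ring. unfold Rdiv. ring. Qed.

Lemma kdw2 z : kappa * dw 2%nat z = Ff (w z).
Proof. unfold Ff. rewrite <- eta_w. pose proof (R2 z). lra. Qed.

Lemma energy z : kappa / 2 * dw 1%nat z ^ 2 = Gf (w z).
Proof.
  set (H := fun z => kappa / 2 * dw 1%nat z ^ 2 - Gf (w z)).
  assert (DH : forall z, derivable_pt_lim H z 0).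
  { intros t. unfold H. apply dlim_eq with (kappa / 2 * (dw 2%nat t * dw 1%nat t + dw 1%nat t * dw 2%nat t) - Ff (w t) * dw 1%nat t).
    - apply dminus.
      + apply dlim_ext with (fun y => kappa / 2 * (dw 1%nat y * dw 1%nat y)); [intros; ring|].
        apply dscal. apply dmult; apply Hwd.
      + apply (dcomp w Gf). apply Dw. apply dG. apply pos_w.
    - rewrite <- kdw2. field. }
  assert (K : forall y, H y = H 0) by (intros; apply (zero_deriv_const H (fun _ => 0)); auto).
  assert (TH : tends_pinf H 0).
  { unfold H. apply tp_minus0.
    - apply tp_scal. apply tp_ext with (fun y => dw 1%nat y * dw 1%nat y); [intros; ring|]. apply tp_mult0; apply T1p.
    - rewrite <- G0. apply tp_comp_cont; auto. apply (dlim_cont Gf 0 (Ff 0)). apply dG. rewrite Rmult_0_r, Rplus_0_r; apply AA_pos. }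
  pose proof (tp_const_eq H (H 0) K TH) as E0. pose proof (K z) as E1. rewrite E0 in E1. unfold H in E1. lra.
Qed.

Lemma cont_w x : continuity_pt w x.
Proof. apply (dlim_cont w x (dw 1%nat x)), Dw. Qed.

Lemma attained t y1 y2 : w y1 <= t <= w y2 -> exists y, w y = t.
Proof. intros Ht. assert (C : continuity (fun y => w y - t)).
  { intros x. apply (continuity_pt_minus w (fun _ => t)); [apply cont_w| apply continuity_pt_const; intros ? ?; auto]. }
  destruct (Rle_dec y1 y2).
  - destruct (IVT_cor _ y1 y2 C r) as [y [_ Hy]]; [nra|]. exists y; lra.
  - destruct (IVT_cor _ y2 y1 C) as [y [_ Hy]]; [lra|nra|]. exists y; lra. Qed.

Lemma phi_triv : (forall y, dw 1%nat y = 0) -> False.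
Proof. intros Z.
  assert (K : forall y, w y = w 0) by (intros; apply (zero_deriv_const w (dw 1%nat)); auto; apply Dw).
  assert (W0 : w 0 = 0) by (apply (tp_const_eq w); auto).
  destruct Hnc as [z1 [z2 [N|N]]]; apply N.
  - rewrite K, (K z2); auto.
  - rewrite !eta_w, K, (K z2); auto. Qed.

Section Pos.
Hypothesis Hs : 0 < s.

Lemma Ff'_mono u1 u2 : 0 <= u1 < u2 -> Ff' u1 < Ff' u2.
Proof. intros H. unfold Ff'. pose proof AA_pos.
  replace (- / (nu + 2) - 1) with (- (/ (nu + 2) + 1)) by ring. rewrite !Rpower_Ropp.
  assert (0 < / (nu + 2) + 1) by (assert (0 < / (nu+2)) by (apply Rinv_0_lt_compat; lra); lra).
  assert (Rpower (AA + s * u1) (/ (nu + 2) + 1) < Rpower (AA + s * u2) (/ (nu + 2) + 1)).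
  { apply Rlt_Rpower_l; auto. split; nra. }
  assert (/ Rpower (AA + s * u2) (/ (nu + 2) + 1) < / Rpower (AA + s * u1) (/ (nu + 2) + 1)).
  { apply Rinv_lt_contravar; auto. apply Rmult_lt_0_compat; apply Rpower_pos. }
  assert (0 < s ^ 2 / (nu + 2)) by (apply Rdiv_lt_0_compat; [nra|lra]). nra. Qed.

Lemma zero_min z : dw 1%nat z = 0 -> 0 < Ff (w z) /\ forall y, w z <= w y.
Proof.
  intros Pz. set (x := w z).
  assert (Gx : Gf x = 0) by (unfold x; rewrite <- energy, Pz; ring).
  assert (Gnn : forall y, 0 <= Gf (w y)) by (intros; rewrite <- energy; pose proof (pow2_ge_0 (dw 1%nat y)); nra).
  assert (Apos : forall u y1 y2, w y1 <= u <= w y2 -> 0 < AA + s * u) by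
    (intros u y1 y2 Hu; destruct (attained u y1 y2 Hu) as [y Hy]; rewrite <- Hy; apply pos_w).
  assert (CF : continuity_pt Ff x) by (apply (dlim_cont Ff x (Ff' x)), dF, pos_w).
  destruct (Rtotal_order (Ff x) 0) as [Fn|[Fz|Fp]].
  - exfalso.
    assert (Mx : forall y, w y <= x).
    { intros y. apply Rnot_lt_le. intros Hy.
      destruct (cont_neg Ff x CF Fn) as [d [Hd Hnb]].
      set (t := Rmin (w y) (x + d / 2)).
      assert (Ht : x < t <= w y) by (unfold t; split; [apply Rmin_glb_lt; lra| apply Rmin_l]).
      destruct (attained t z y) as [y' Hy']; [unfold x in Ht; lra|].
      assert (G1 := Gnn y'). rewrite Hy' in G1.
      destruct (mvt Gf Ff x t) as [xi [Hxi E]]; [lra| |].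
      { intros c Hc. apply dG. apply (Apos c z y). unfold x in *; lra. }
      assert (Ff xi < 0).
      { apply Hnb. assert (t <= x + d / 2) by (unfold t; apply Rmin_r). apply Rabs_def1; lra. }
      nra. }
    assert (x0 : 0 <= x).
    { apply Rnot_lt_le; intros Hx. destruct (Tw1 (- x)) as [A HA]; [lra|].
      specialize (HA A (Rle_refl _)). specialize (Mx A). rewrite Rminus_0_r in HA. apply Rabs_def2 in HA. lra. }
    assert (xp : 0 < x) by (destruct x0 as [|E]; auto; rewrite <- E in Fn; rewrite F0 in Fn; lra).
    assert (Ap : forall u, 0 <= u -> 0 < AA + s * u) by (intros; pose proof AA_pos; nra).
    destruct (mvt Gf Ff 0 x) as [xi [Hxi E1]]; [lra| intros c Hc; apply dG, Ap; lra|].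
    rewrite Gx, G0 in E1. assert (Fxi : Ff xi = 0) by nra.
    destruct (mvt Ff Ff' 0 xi) as [eta' [Heta E2]]; [lra| intros c Hc; apply dF, Ap; lra|].
    rewrite Fxi, F0 in E2. assert (Ff' eta' = 0) by nra.
    destruct (mvt Ff Ff' xi x) as [th [Hth E3]]; [lra| intros c Hc; apply dF, Ap; lra|].
    rewrite Fxi in E3. assert (Ff' th < 0) by nra.
    assert (Ff' eta' < Ff' th) by (apply Ff'_mono; lra). lra.
  - exfalso. assert (dw 2%nat z = 0) by (pose proof (kdw2 z); fold x in H; rewrite Fz in H; nra).
    apply phi_triv. intros y. apply (ode_uniq (dw 1%nat) (dw 2%nat) (dw 3%nat) q0 z); auto.
    apply phi_eq. apply cont_q0.
  - split; auto. intros y. apply Rnot_lt_le. intros Hy.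
    destruct (cont_pos Ff x CF Fp) as [d [Hd Hnb]].
    set (t := Rmax (w y) (x - d / 2)).
    assert (Ht : w y <= t < x) by (unfold t; split; [apply Rmax_l| apply Rmax_lub_lt; lra]).
    destruct (attained t y z) as [y' Hy']; [unfold x in Ht; lra|].
    assert (G1 := Gnn y'). rewrite Hy' in G1.
    destruct (mvt Gf Ff t x) as [xi [Hxi E]]; [lra| |].
    { intros c Hc. apply dG. apply (Apos c y z). unfold x in *; lra. }
    assert (0 < Ff xi).
    { apply Hnb. assert (x - d / 2 <= t) by (unfold t; apply Rmax_r). apply Rabs_def1; lra. }
    nra.
Qed.

Lemma phi_one_pos : forall a b, dw 1%nat a = 0 -> dw 1%nat b = 0 -> a = b.
Proof.
  assert (K : forall a b, a < b -> dw 1%nat a = 0 -> dw 1%nat b = 0 -> False).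
  { intros a b Hab Pa Pb. destruct (zero_min a Pa) as [Fa Ma]. destruct (zero_min b Pb) as [Fb Mb].
    assert (Eab : w a = w b) by (specialize (Ma b); specialize (Mb a); lra).
    destruct (continuity_ab_maj w a b) as [c [Hc Hcab]]; [lra| intros; apply cont_w|].
    destruct (Req_dec (w c) (w a)) as [Ec|Nc].
    - assert (Wc : forall y, a <= y <= b -> w y = w a).
      { intros y Hy. specialize (Hc y Hy). specialize (Ma y). lra. }
      assert (P0 : forall y, a < y < b -> dw 1%nat y = 0).
      { intros y Hy. apply (dlim_locconst w y (dw 1%nat y) (Rmin (y - a) (b - y)) (w a)).
        - apply Rmin_pos; lra.
        - intros u Hu. apply Wc. apply Rabs_def2 in Hu.
          pose proof (Rmin_l (y - a) (b - y)). pose proof (Rmin_r (y - a) (b - y)). lra.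
        - apply Dw. }
      set (m := (a + b) / 2).
      assert (dw 2%nat m = 0).
      { apply (dlim_locconst (dw 1%nat) m (dw 2%nat m) ((b - a) / 2) 0); [lra| |apply Hwd].
        intros u Hu. apply P0. apply Rabs_def2 in Hu. unfold m in Hu. lra. }
      pose proof (kdw2 m) as E5. rewrite (Wc m) in E5 by (unfold m; lra). rewrite H, Rmult_0_r in E5. lra.
    - assert (a < c < b).
      { split; (apply Rnot_le_lt; intro; assert (c = a \/ c = b) as [->| ->] by lra; lra). }
      assert (dw 1%nat c = 0) by (apply (dlim_max w c (dw 1%nat c) a b); [lra| intros; apply Hc; lra| apply Dw]).
      destruct (zero_min c H0) as [_ Mc]. specialize (Mc a). specialize (Hc a). lra. }
  intros a b Pa Pb. destruct (Rtotal_order a b) as [H|[H|H]]; auto; exfalso; eapply K; eauto.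
Qed.

End Pos.

End Sol.

Lemma cont_sq h x : continuity_pt h x -> continuity_pt (fun x => h x ^ 2) x.
Proof. intros C. replace (fun x => h x ^ 2) with (fun x => h x * h x) by (apply functional_extensionality; intros; ring).
  apply (continuity_pt_mult h h x C C). Qed.

Lemma RI_cont f a b : (forall x, continuity_pt f x) -> inhabited (Riemann_integrable f a b).
Proof. intros C. constructor. destruct (Rle_dec a b).
  - apply continuity_implies_RiemannInt; auto.
  - apply RiemannInt_P1. apply continuity_implies_RiemannInt; auto; lra. Qed.

Lemma RI_scal_bound f a b K C (prf : Riemann_integrable (fun x => f x ^ 2) a b) :
  a <= b -> 0 <= K -> RiemannInt prf <= C ->
  forall g (prg : Riemann_integrable g a b), (forall x, a < x < b -> g x <= K * f x ^ 2) -> RiemannInt prg <= K * C.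
Proof.
  intros Hab HK HC g prg Hg.
  assert (pr0 := RiemannInt_P14 a b 0).
  assert (pr3 := RiemannInt_P10 K pr0 prf).
  assert (E := RiemannInt_P13 pr0 prf pr3). rewrite RiemannInt_P15 in E.
  assert (L : RiemannInt prg <= RiemannInt pr3).
  { apply RiemannInt_P19; auto. intros x Hx. unfold fct_cte. specialize (Hg x Hx). lra. }
  assert (L2 : RiemannInt prg <= 0 * (b - a) + K * RiemannInt prf) by (eapply Rle_trans; [exact L| right; exact E]). nra. Qed.

Lemma sqi_dom f h K : (forall x, continuity_pt h x) -> 0 <= K -> (forall x, h x ^ 2 <= K * f x ^ 2) ->
  sq_integrable f -> sq_integrable h.
Proof.
  intros Ch HK Hb [If [C HC]]. split.
  - intros a b. apply RI_cont. intros; apply cont_sq; auto.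
  - exists (K * C). intros a b pr Hab. destruct (If a b) as [prf].
    apply (RI_scal_bound f a b K C prf Hab HK (HC a b prf Hab)). intros; auto. Qed.

Lemma sqi_deriv M M1 M2 q Bq : (forall z, derivable_pt_lim M z (M1 z)) -> (forall z, derivable_pt_lim M1 z (M2 z)) ->
  (forall z, M2 z = q z * M z) -> (forall z, continuity_pt q z) -> (forall z, Rabs (q z) <= Bq) ->
  tends_pinf M 0 -> tends_minf M 0 -> tends_pinf M1 0 -> tends_minf M1 0 ->
  sq_integrable M -> sq_integrable M1.
Proof.
  intros D1 D2 E Cq Bqb T1 T2 T3 T4 [IM [C HC]].
  assert (CM : forall x, continuity_pt M x) by (intros x; apply (dlim_cont M x (M1 x)); auto).
  assert (CM1 : forall x, continuity_pt M1 x) by (intros x; apply (dlim_cont M1 x (M2 x)); auto).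
  assert (CMM1 : forall x, continuity_pt (fun z => M z * M1 z) x) by (intros x; apply (continuity_pt_mult M M1 x); auto).
  destruct (bound_global (fun z => M z * M1 z)) as [B HB]; auto.
  { apply tp_mult0; auto. } { apply tm_mult0; auto. }
  assert (HBq : 0 <= Bq) by (apply Rle_trans with (Rabs (q 0)); [apply Rabs_pos| auto]).
  split.
  - intros a b. apply RI_cont. intros; apply cont_sq; auto.
  - exists (2 * B + Bq * C). intros a b pr Hab.
    set (h := fun x => M1 x * M1 x + M x * M2 x).
    assert (Dh : forall x, derivable_pt_lim (fun z => M z * M1 z) x (h x)).
    { intros x. unfold h. apply dlim_eq with (M1 x * M1 x + M x * M2 x); [apply dmult; auto| ring]. }
    set (dif := fun x => exist (fun l => derivable_pt_lim (fun z => M z * M1 z) x l) (h x) (Dh x) : derivable_pt (fun z => M z * M1 z) x).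
    assert (Ch : continuity (derive (fun z => M z * M1 z) dif)).
    { intros x. unfold derive, derive_pt, dif. simpl. unfold h.
      replace (fun x => M1 x * M1 x + M x * M2 x) with (fun x => M1 x * M1 x + M x * (q x * M x)) by
        (apply functional_extensionality; intros; rewrite E; auto).
      apply (continuity_pt_plus (fun x => M1 x * M1 x) (fun x => M x * (q x * M x))).
      - apply (continuity_pt_mult M1 M1); auto.
      - apply (continuity_pt_mult M (fun x => q x * M x)); auto; apply (continuity_pt_mult q M); auto. }
    set (F := @mkC1 (fun z => M z * M1 z) dif Ch).
    assert (prd : Riemann_integrable (derive F (diff0 F)) a b).
    { apply continuity_implies_RiemannInt; auto; intros; apply (cont1 F). }
    assert (FTC : RiemannInt prd = M b * M1 b - M a * M1 a) by (exact (FTC_Riemann F prd)).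
    destruct (IM a b) as [prM].
    assert (pr3 := RiemannInt_P10 Bq prd prM).
    assert (E3 := RiemannInt_P13 prd prM pr3).
    assert (L : RiemannInt pr <= RiemannInt pr3).
    { apply RiemannInt_P19; auto. intros x Hx. simpl. unfold h.
      unfold derive, derive_pt, dif; simpl; unfold h. rewrite E. specialize (Bqb x). apply Rabs_def2b in Bqb || idtac.
      assert (- Bq <= q x) by (pose proof (Rle_abs (- q x)); rewrite Rabs_Ropp in H; lra).
      pose proof (pow2_ge_0 (M x)). nra. }
    assert (L2 : RiemannInt pr <= RiemannInt prd + Bq * RiemannInt prM) by (eapply Rle_trans; [exact L| right; exact E3]). rewrite FTC in L2. specialize (HC a b prM Hab).
    pose proof (HB a) as Ba. pose proof (HB b) as Bb. apply Rabs_def2b in Ba || idtac.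
    assert (M b * M1 b <= B) by (pose proof (Rle_abs (M b * M1 b)); lra).
    assert (- B <= M a * M1 a) by (pose proof (Rle_abs (- (M a * M1 a))); rewrite Rabs_Ropp in H0; lra).
    nra.
Qed.

Lemma Qmono g s p ma mb : ma < mb -> mb < p -> g - mb + s ^ 2 / (mb - p) < g - ma + s ^ 2 / (ma - p).
Proof. intros H1 H2.
  assert (/ (mb - p) < / (ma - p)).
  { assert (/ - (ma - p) < / - (mb - p)) by (apply Rinv_lt_contravar; nra).
    rewrite !Rinv_opp in H. lra. }
  unfold Rdiv. pose proof (pow2_ge_0 s). nra. Qed.

Definition qm (g kappa s mu nu : R) (eta : R -> R) (z : R) := (g - mu + s ^ 2 / (mu - pp nu eta z)) / kappa.

Lemma qm_cont g kappa s mu nu eta deta : 0 < kappa -> mu < 0 -> -1 < nu ->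
  (forall x, deta O x = eta x) -> (forall n x, derivable_pt_lim (deta n) x (deta (S n) x)) -> (forall z, 0 < eta z) ->
  forall z, continuity_pt (qm g kappa s mu nu eta) z.
Proof. intros Hk Hmu Hnu H0 Hd Hp z. unfold qm.
  assert (Cp := cont_pp nu eta deta H0 Hd Hp z). assert (P := pp_pos nu eta Hnu z).
  apply (continuity_pt_div (fun z => g - mu + s ^ 2 / (mu - pp nu eta z)) (fun _ => kappa)); [| apply continuity_pt_const; intros ? ?; auto| lra].
  apply (continuity_pt_plus (fun _ => g - mu) (fun z => s ^ 2 / (mu - pp nu eta z))); [apply continuity_pt_const; intros ? ?; auto|].
  apply (continuity_pt_div (fun _ => s ^ 2) (fun z => mu - pp nu eta z)); [apply continuity_pt_const; intros ? ?; auto| |lra].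
  apply (continuity_pt_minus (fun _ => mu) (pp nu eta)); auto. apply continuity_pt_const; intros ? ?; auto. Qed.

Lemma qm_bound g kappa s mu nu eta : 0 < kappa -> mu < 0 -> -1 < nu -> (forall z, 0 < eta z) ->
  forall z, Rabs (qm g kappa s mu nu eta z) <= (Rabs (g - mu) + s ^ 2 / (- mu)) / kappa.
Proof. intros Hk Hmu Hnu Hp z. unfold qm. assert (P := pp_pos nu eta Hnu z).
  unfold Rdiv at 1. rewrite Rabs_mult, Rabs_inv, (Rabs_right kappa) by lra. unfold Rdiv at 2.
  apply Rmult_le_compat_r; [left; apply Rinv_0_lt_compat; lra|].
  apply Rle_trans with (1 := Rabs_triang _ _). apply Rplus_le_compat_l.
  unfold Rdiv. rewrite Rabs_mult, Rabs_inv, (Rabs_right (s ^ 2)) by (apply Rle_ge, pow2_ge_0).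
  rewrite (Rabs_left (mu - pp nu eta z)) by lra. apply Rmult_le_compat_l; [apply pow2_ge_0|].
  apply Rinv_le_contravar; lra. Qed.

Lemma eig_sol beta nu kappa s eta mu M : 0 < kappa -> mu < 0 -> -1 < nu -> (forall z, 0 < eta z) ->
  gen_eigen beta nu kappa s eta mu M ->
  exists M1 M2, sol (qm (gam beta nu) kappa s mu nu eta) M M1 M2 /\ sq_integrable M /\ (exists z, M z <> 0) /\
    (forall z, kappa * M2 z = (gam beta nu - mu + s ^ 2 / (mu - pot nu eta z)) * M z).
Proof. intros Hk Hmu Hnu Hp [M1 [M2 [D1 [D2 [Sq [Nz [T1 [T2 [T3 [T4 Eq]]]]]]]]]].
  exists M1, M2. split; [|split; [auto|split; auto]]. repeat split; auto.
  intros z. assert (P := pp_pos nu eta Hnu z). unfold qm. apply Rmult_eq_reg_l with kappa; [|lra]. rewrite Eq. unfold pot. unfold pp in *. field. split; lra. Qed.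

Lemma q0_lt g kappa s mu nu eta : 0 < kappa -> mu < 0 -> -1 < nu -> (forall z, 0 < eta z) ->
  forall z, q0 g nu kappa s eta z < qm g kappa s mu nu eta z.
Proof. intros Hk Hmu Hnu Hp z. unfold q0, qm. assert (P := pp_pos nu eta Hnu z).
  unfold Rdiv at 1 3. apply Rmult_lt_compat_r; [apply Rinv_0_lt_compat; lra|].
  replace (g - s ^ 2 / pp nu eta z) with (g - 0 + s ^ 2 / (0 - pp nu eta z)) by (field; lra).
  apply Qmono; lra. Qed.

Lemma qm_lt g kappa s ma mb nu eta : 0 < kappa -> ma < mb -> mb < 0 -> -1 < nu -> (forall z, 0 < eta z) ->
  forall z, qm g kappa s mb nu eta z < qm g kappa s ma nu eta z.
Proof. intros Hk Hm Hmu Hnu Hp z. unfold qm. assert (P := pp_pos nu eta Hnu z).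
  unfold Rdiv at 1 3. apply Rmult_lt_compat_r; [apply Rinv_0_lt_compat; lra|].
  apply Qmono; lra. Qed.

Theorem mainTheorem7 (beta nu kappa eta_inf s : R) (w eta : R -> R)
  (Hbeta : 0 < beta) (Hnu : -1 < nu) (Hkappa : 0 < kappa) (Heta_inf : 0 < eta_inf)
  (Hsol : soliton beta nu kappa eta_inf s w eta)
  (Hs1 : beta * (nu + 1) / (2 * (nu + 2) * Rpower eta_inf (nu + 3)) < s ^ 2)
  (Hs2 : s ^ 2 < beta / Rpower eta_inf (nu + 3)) :
  (forall mu1 mu2 M1 M2, mu1 < 0 -> mu2 < 0 ->
     gen_eigen beta nu kappa s eta mu1 M1 -> gen_eigen beta nu kappa s eta mu2 M2 ->
     mu1 = mu2) /\
  (forall mu M, mu < 0 -> gen_eigen beta nu kappa s eta mu M ->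
     Ls_eigen beta nu kappa s eta mu M (fun z => s * M z / (mu - pot nu eta z))).
Proof.
  destruct Hsol as [dw [deta [[Hw0 Hwd] [[He0 Hed] [Hpos [Hnc [R1 [R2 [Tw1 [Tw2 [Te1 Te2]]]]]]]]]]].
  set (g := gam beta nu) in *.
  assert (Hs : s <> 0).
  { intros ->. assert (0 < beta * (nu + 1) / (2 * (nu + 2) * Rpower eta_inf (nu + 3))).
    { apply Rdiv_lt_0_compat; [nra|]. pose proof (Rpower_pos eta_inf (nu + 3)). nra. }
    simpl in Hs1. lra. }
  assert (Phi1 : forall a b, dw 1%nat a = 0 -> dw 1%nat b = 0 -> a = b).
  { destruct (Rlt_dec 0 s) as [sp|sn].
    - exact (phi_one_pos g nu kappa eta_inf s w eta dw deta Hnu Hkappa Heta_inf Hw0 Hwd He0 Hed Hpos Hnc R1 R2 Tw1 Te1 sp).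
    - intros a b Ha Hb.
      apply (phi_one_pos g nu kappa eta_inf (- s) (fun z => - w z) eta (fun n z => - dw n z) deta Hnu Hkappa Heta_inf).
      + intros; rewrite Hw0; auto.
      + intros; apply dopp; auto.
      + auto. + auto. + auto.
      + destruct Hnc as [z1 [z2 [N|N]]]; exists z1, z2; [left|right]; auto. intro E; apply N; lra.
      + intros z; rewrite <- (R1 z); ring.
      + intros z; pose proof (R2 z); nra.
      + apply tp_opp; auto.
      + auto.
      + lra.
      + rewrite Ha; ring.
      + rewrite Hb; ring. }
  assert (PS := phi_sol g nu kappa eta_inf s w eta dw deta Hnu Hkappa Hw0 Hwd He0 Hed Hpos R1 R2 Tw1 Tw2 Te1 Te2).
  assert (NZ : forall mu M, mu < 0 -> gen_eigen beta nu kappa s eta mu M ->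
     exists M1 M2, sol (qm g kappa s mu nu eta) M M1 M2 /\ forall z, M z <> 0).
  { intros mu M Hmu HE. destruct (eig_sol beta nu kappa s eta mu M Hkappa Hmu Hnu Hpos HE) as [M1 [M2 [S [_ [Nt _]]]]].
    exists M1, M2. split; auto.
    apply (nozero _ _ M M1 M2 (dw 1%nat) (dw 2%nat) (dw 3%nat) S PS); auto.
    - apply q0_lt; auto.
    - apply (qm_cont g kappa s mu nu eta deta); auto. }
  split.
  - intros mu1 mu2 M1 M2 H1 H2 E1 E2.
    destruct (NZ mu1 M1 H1 E1) as [A1 [A2 [SA NA]]]. destruct (NZ mu2 M2 H2 E2) as [B1 [B2 [SB NB]]].
    destruct (Rtotal_order mu1 mu2) as [L|[L|L]]; auto; exfalso.
    + apply (two_eig _ _ M1 A1 A2 M2 B1 B2 SA SB); auto. apply qm_lt; auto.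
    + apply (two_eig _ _ M2 B1 B2 M1 A1 A2 SB SA); auto. apply qm_lt; auto.
  - intros mu M Hmu HE.
    destruct (eig_sol beta nu kappa s eta mu M Hkappa Hmu Hnu Hpos HE) as [M1 [M2 [S [Sq [Nt Eq]]]]].
    destruct S as [D1 [D2 [E [T1 [T2 [T3 T4]]]]]].
    assert (Cq := qm_cont g kappa s mu nu eta deta Hkappa Hmu Hnu He0 Hed Hpos).
    assert (Bq := qm_bound g kappa s mu nu eta Hkappa Hmu Hnu Hpos).
    set (K := (Rabs (g - mu) + s ^ 2 / (- mu)) / kappa) in *.
    assert (CM : forall x, continuity_pt M x) by (intros x; apply (dlim_cont M x (M1 x)); auto).
    assert (Ppos : forall z, 0 < pot nu eta z) by (intros z; apply (pp_pos nu eta Hnu z)).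
    exists M1, M2. refine (conj D1 (conj D2 (conj Sq (conj _ (conj _ (conj _ (conj _ (conj _ _)))))))).
    idtac.
    + apply (sqi_deriv M M1 M2 (qm g kappa s mu nu eta) K); auto.
    + apply (sqi_dom M M2 (K ^ 2)).
      * intros x. replace M2 with (fun z => qm g kappa s mu nu eta z * M z) by (apply functional_extensionality; intros; rewrite E; auto).
        apply (continuity_pt_mult (qm g kappa s mu nu eta) M); auto.
      * apply pow2_ge_0.
      * intros x. rewrite E. specialize (Bq x). rewrite Rpow_mult_distr.
        apply Rmult_le_compat_r; [apply pow2_ge_0|].
        pose proof (Rabs_pos (qm g kappa s mu nu eta x)).
        assert (e : Rabs (qm g kappa s mu nu eta x) * Rabs (qm g kappa s mu nu eta x) = qm g kappa s mu nu eta x * qm g kappa s mu nu eta x)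
          by (rewrite <- Rabs_mult; apply Rabs_right; nra).
        pose proof (Rmult_le_compat _ _ _ _ H H Bq Bq). simpl. change (gam beta nu) with g. nra.
      * auto.
    + apply (sqi_dom M (fun z => s * M z / (mu - pot nu eta z)) (s ^ 2 / mu ^ 2)).
      * intros x. apply (continuity_pt_div (fun z => s * M z) (fun z => mu - pot nu eta z)).
        -- apply (continuity_pt_mult (fun _ => s) M); auto. apply continuity_pt_const; intros ? ?; auto.
        -- apply (continuity_pt_minus (fun _ => mu) (pot nu eta)); [apply continuity_pt_const; intros ? ?; auto|].
           apply (cont_pp nu eta deta He0 Hed Hpos).
        -- specialize (Ppos x). lra.
      * apply Rmult_le_pos; [apply pow2_ge_0| left; apply Rinv_0_lt_compat; nra].
      * intros x. specialize (Ppos x).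
        replace ((s * M x / (mu - pot nu eta x)) ^ 2) with (s ^ 2 * M x ^ 2 * / (mu - pot nu eta x) ^ 2) by (field; lra).
        replace (s ^ 2 / mu ^ 2 * M x ^ 2) with (s ^ 2 * M x ^ 2 * / mu ^ 2) by (field; lra).
        apply Rmult_le_compat_l; [apply Rmult_le_pos; apply pow2_ge_0|].
        apply Rinv_le_contravar; [nra|]. nra.
      * auto.
    + destruct Nt as [z Hz]. exists z. left; auto.
    + intros z. change (gam beta nu) with g in Eq |- *. specialize (Ppos z). specialize (Eq z).
      replace (kappa * M2 z) with ((g - mu + s ^ 2 / (mu - pot nu eta z)) * M z) by (symmetry; exact Eq).
      field. lra.
    + intros z. specialize (Ppos z). field. lra.
Qed.
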